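(* Let $V$ be a $K$-vector space and let $Moor(V)=V\otimes S(V)$ be the free $Moor$-algebra over $V$, with product determined by $(v\otimes\omega)\prec(v'\otimes 1)=v\otimes(\omega\vee v')$ and $(v\otimes\omega)\prec(v'\otimes\omega')=0$ for $\omega'\in S^n(V)$, $n\geq 1$, graded by $Moor(V)_n=V\otimes S^{n-1}(V)$ for $n\geq 1$. Then $Moor(V)$ can be equipped with a cooperation making it a connected $Moor$-bialgebra.
   Context: $K$ is a field of characteristic zero; $S(V)=K\oplus\bigoplus_{n>0}S^n(V)$ is the symmetric algebra with product $\vee$, and $1\in K=S^0(V)$; $\tau$ is the flip map. A $Moor$-bialgebra is a graded vector space $\mathcal{H}=\bigoplus_{p>0}\mathcal{H}_p$ with a bilinear operation $\prec$ satisfying $\mathcal{H}_p\prec\mathcal{H}_q\subseteq\mathcal{H}_{p+q}$, $(x\prec y)\prec z=(x\prec z)\prec y$ and $x\prec(y\prec z)=0$, together with a linear map $\Delta:\mathcal{H}\to\mathcal{H}\otimes\mathcal{H}$ (Sweedler notation $\Delta(x)=x_{(1)}\otimes x_{(2)}$) satisfying $(\mathrm{id}\otimes\Delta)\Delta=0$, $(\Delta\otimes\mathrm{id})\Delta=(\mathrm{id}\otimes\tau)(\Delta\otimes\mathrm{id})\Delta$, and $\Delta(x\prec y)=x\otimes e(y)+(x_{(1)}\prec y)\otimes x_{(2)}$ for all $x,y$, where $e:\mathcal{H}\to\mathcal{H}_1$ is the canonical projection. Set $\Delta^{(1)}=\Delta$ and $\Delta^{(r)}=(\Delta\otimes\mathrm{id}^{\otimes(r-1)})\Delta^{(r-1)}$.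 The $Moor$-bialgebra is connected if $\ker\Delta\subseteq\mathcal{H}_1$ and $\mathcal{H}=\bigcup_{r\geq 1}\ker\Delta^{(r)}$. *)

(* Defs.v *)
From HB Require Import structures.
From mathcomp Require Import all_boot all_order all_algebra.
From mathcomp Require Import finmap.
From mathcomp Require Import monalg.
Set Implicit Arguments. Unset Strict Implicit. Unset Printing Implicit Defensive.
Import GRing.Theory.
Local Open Scope ring_scope.

(* V is the K-vector space with basis I, i.e. {malg K[I]};
   S(V) = {malg K[{cmonom I}]} (polynomials in the basis vectors);
   Moor(V) = V (x) S(V) is the free K-space on the basis
   e_i (x) m  (i : I, m a monomial), i.e. on the type  I * {cmonom I}.
   Tensor powers of Moor(V) are free on pairs / triples / words of basis
   elements. *)

Section MoorDefs.
Variables (K : fieldType) (I : choiceType).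

Definition MB : choiceType := (I * {cmonom I})%type.
Definition Moor := {malg K[MB]}.
Definition Moor2 := {malg K[(MB * MB)%type]}.
Definition Moor3 := {malg K[(MB * MB * MB)%type]}.
Definition MoorW := {malg K[seq MB]}.

(* grading: e_i (x) m  lies in Moor(V)_{deg m + 1} = V (x) S^{deg m}(V) *)
Definition mdegB (b : MB) : nat := (mdeg b.2).+1.
Definition homog (p : nat) (x : Moor) : Prop :=
  forall b, b \in msupp x -> mdegB b = p.

Definition eproj (x : Moor) : Moor :=
  \sum_(b <- msupp x | mdeg b.2 == 0%N) << x@_b *g b >>.

(* the free Moor product, bilinear extension of
   (v (x) w) < (v' (x) 1)  = v (x) (w v'),  (v (x) w) < (v' (x) w') = 0 if deg w' >= 1 *)
Definition prec_basis (b c : MB) : Moor :=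
  if c.2 == @onecm I then << (b.1, mulcm b.2 (ucm c.1)) >> else 0.
Definition prec (x y : Moor) : Moor :=
  \sum_(b <- msupp x) \sum_(c <- msupp y) (x@_b * y@_c) *: prec_basis b c.

Definition tens (x y : Moor) : Moor2 :=
  \sum_(b <- msupp x) \sum_(c <- msupp y) (x@_b * y@_c) *: << (b, c) >>.

Section WithDelta.
Variable D : Moor -> Moor2.
Definition Db (b : MB) : Moor2 := D << b >>.

Definition id_tens_D (z : Moor2) : Moor3 :=
  \sum_(p <- msupp z) z@_p *:
     \sum_(q <- msupp (Db p.2)) (Db p.2)@_q *: << (p.1, q.1, q.2) >>.
Definition D_tens_id (z : Moor2) : Moor3 :=
  \sum_(p <- msupp z) z@_p *:
     \sum_(q <- msupp (Db p.1)) (Db p.1)@_q *: << (q.1, q.2, p.2) >>.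
Definition id_tens_tau (t : Moor3) : Moor3 :=
  \sum_(p <- msupp t) t@_p *: << (p.1.1, p.2, p.1.2) >>.

Definition prec_left (z : Moor2) (y : Moor) : Moor2 :=
  \sum_(p <- msupp z) z@_p *: tens (prec << p.1 >> y) << p.2 >>.

(* iterated coproducts Delta^(r) : Moor -> Moor^{(x)(r+1)} as words *)
Definition toW2 (z : Moor2) : MoorW :=
  \sum_(p <- msupp z) z@_p *: << [:: p.1; p.2] >>.
Definition D_first (w : MoorW) : MoorW :=
  \sum_(s <- msupp w) w@_s *:
     (match s with
      | b :: t => \sum_(q <- msupp (Db b)) (Db b)@_q *: << q.1 :: q.2 :: t >>
      | [::] => 0
      end).
Fixpoint Diter (r : nat) (x : Moor) : MoorW :=
  match r with
  | 0 => 0   (* unused *)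
  | 1 => toW2 (D x)
  | r'.+1 => D_first (Diter r' x)
  end.
End WithDelta.

Definition is_Moor_bialgebra (D : Moor -> Moor2) : Prop :=
  (forall a x y z, prec (a *: x + y) z = a *: prec x z + prec y z) /\
  (forall a x y z, prec x (a *: y + z) = a *: prec x y + prec x z) /\
  (forall p q x y, homog p x -> homog q y -> homog (p + q) (prec x y)) /\
  (forall x y z, prec (prec x y) z = prec (prec x z) y) /\
  (forall x y z, prec x (prec y z) = 0) /\
  (forall a x y, D (a *: x + y) = a *: D x + D y) /\
  (forall x, id_tens_D D (D x) = 0) /\
  (forall x, D_tens_id D (D x) = id_tens_tau (D_tens_id D (D x))) /\
  (forall x y, D (prec x y) = tens x (eproj y) + prec_left (D x) y).

Definition Moor_connected (D : Moor -> Moor2) : Prop :=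
  (forall x, D x = 0 -> homog 1 x) /\
  (forall x, exists r, (1 <= r)%N /\ Diter D r x = 0).

End MoorDefs.

(* Main.v *)
Require Import Defs.
From HB Require Import structures.
From mathcomp Require Import all_boot all_order all_algebra.
From mathcomp Require Import finmap monalg.
Set Implicit Arguments. Unset Strict Implicit. Unset Printing Implicit Defensive.
Import GRing.Theory.
Local Open Scope ring_scope.

Section Gen.
Variables (K : fieldType) (X : choiceType) (M : lmodType K).

Fact bas_key : unit. Proof. exact: tt. Qed.
Definition bas (k : X) : {malg K[X]} := locked_with bas_key (fun k => << k >>) k.
Lemma basE k : bas k = << k >>.
Proof. by rewrite /bas unlock. Qed.
Lemma toBas k : << k >> = bas k :> {malg K[X]}.
Proof. by rewrite basE. Qed.

Definition lin (f : X -> M) (x : {malg K[X]}) : M :=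
  \sum_(b <- msupp x) x@_b *: f b.

Definition islin (F : {malg K[X]} -> M) :=
  forall a x y, F (a *: x + y) = a *: F x + F y.

Lemma mkU (c : K) (k : X) : << c *g k >> = c *: bas k :> {malg K[X]}.
Proof. by rewrite basE; apply/malgP=> k'; rewrite mcoeffZ !mcoeffU mulr_natr. Qed.
Lemma msupp_bas k : msupp (bas k) = [fset k]%fset.
Proof. by rewrite basE msuppU oner_eq0. Qed.
Lemma mcoeff_bas k k' : (bas k)@_k' = (k == k')%:R.
Proof. by rewrite basE mcoeffU. Qed.

Lemma linEw f x (d : {fset X}) : (msupp x `<=` d)%fset ->
  lin f x = \sum_(b <- d) x@_b *: f b.
Proof.
move=> le; rewrite /lin (big_fset_incl _ le) // => b _ nb.
by rewrite mcoeff_outdom // scale0r.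
Qed.

Lemma lin_is_lin f : islin (lin f).
Proof.
move=> a x y.
set d := (msupp x `|` msupp y `|` msupp (a *: x + y))%fset.
have h1 : (msupp x `<=` d)%fset by apply/fsubsetP=> b hb; rewrite !in_fsetU hb.
have h2 : (msupp y `<=` d)%fset by apply/fsubsetP=> b hb; rewrite !in_fsetU hb !orbT.
have h3 : (msupp (a *: x + y) `<=` d)%fset by apply/fsubsetP=> b hb; rewrite !in_fsetU hb !orbT.
rewrite (linEw f h1) (linEw f h2) (linEw f h3) scaler_sumr -big_split /=.
by apply: eq_bigr=> b _; rewrite mcoeffD mcoeffZ scalerDl scalerA.
Qed.

Lemma linU f k : lin f (bas k) = f k.
Proof. by rewrite /lin msupp_bas big_seq_fset1 mcoeff_bas eqxx scale1r. Qed.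

Lemma lin0 f : lin f 0 = 0.
Proof. by rewrite /lin msupp0 big_seq_fset0. Qed.

Lemma islin0 F : islin F -> F 0 = 0.
Proof.
move=> h; have e := h 1 0 0. rewrite scaler0 in e. rewrite addr0 in e. rewrite scale1r in e.
by apply: (addrI (F 0)); rewrite addr0 -e.
Qed.

Lemma islinD F : islin F -> forall x y, F (x + y) = F x + F y.
Proof. by move=> h x y; have := h 1 x y; rewrite !scale1r. Qed.

Lemma islinZ F : islin F -> forall a x, F (a *: x) = a *: F x.
Proof. by move=> h a x; rewrite -[a *: x]addr0 h islin0 // addr0. Qed.

Lemma islin_sum F (I : Type) (s : seq I) (G : I -> {malg K[X]}) :
  islin F -> F (\sum_(i <- s) G i) = \sum_(i <- s) F (G i).
Proof. by move=> h; apply: (big_morph F (islinD h) (islin0 h)). Qed.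

Lemma islin_lin F : islin F -> forall x, F x = lin (fun k => F (bas k)) x.
Proof.
move=> h x; rewrite {1}[x]monalgE islin_sum //.
by apply: eq_bigr=> b _; rewrite mkU islinZ.
Qed.

Lemma islin_ext F G : islin F -> islin G -> (forall k, F (bas k) = G (bas k)) ->
  forall x, F x = G x.
Proof.
by move=> hF hG e x; rewrite (islin_lin hF) (islin_lin hG); apply: eq_bigr=> b _; rewrite e.
Qed.

Lemma lin_comb (f g : X -> M) a x :
  lin (fun b => a *: f b + g b) x = a *: lin f x + lin g x.
Proof.
rewrite /lin scaler_sumr -big_split; apply: eq_bigr=> b _.
by rewrite scalerDr !scalerA mulrC.
Qed.

Lemma lin_ext (f g : X -> M) x : (forall b, b \in msupp x -> f b = g b) ->
  lin f x = lin g x.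
Proof.
move=> e; rewrite /lin !big_seq; apply: eq_bigr=> b hb; by rewrite e.
Qed.

Lemma islin_add F G : islin F -> islin G -> islin (fun x => F x + G x).
Proof.
move=> hF hG a x y; rewrite hF hG scalerDr.
by rewrite -!addrA; congr (_ + _); rewrite addrCA.
Qed.

Lemma lin_sumZ F (I : Type) (s : seq I) (c : I -> K) (t : I -> X) :
  islin F -> F (\sum_(i <- s) c i *: bas (t i)) = \sum_(i <- s) c i *: F (bas (t i)).
Proof. by move=> h; rewrite islin_sum //; apply: eq_bigr=> i _; rewrite islinZ. Qed.

Definition supp_in (P : X -> Prop) (x : {malg K[X]}) :=
  forall b, b \in msupp x -> P b.

Lemma supp_in0 P : supp_in P 0.
Proof. by move=> b; rewrite msupp0. Qed.

Lemma supp_inD P x y : supp_in P x -> supp_in P y -> supp_in P (x + y).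
Proof.
move=> hx hy b /(fsubsetP (msuppD_le x y)); rewrite in_fsetU => /orP[]; auto.
Qed.

Lemma supp_inZ P c x : supp_in P x -> supp_in P (c *: x).
Proof. by move=> hx b /(fsubsetP (msuppZ_le c x)); auto. Qed.

Lemma supp_inU P k : P k -> supp_in P (bas k).
Proof. by move=> hk b; rewrite msupp_bas in_fset1 => /eqP ->. Qed.

Lemma supp_in_sum (P : X -> Prop) (I : eqType) (s : seq I) (G : I -> {malg K[X]}) :
  (forall i, i \in s -> supp_in P (G i)) -> supp_in P (\sum_(i <- s) G i).
Proof.
elim: s => [|i s IH] h; first by rewrite big_nil; apply: supp_in0.
rewrite big_cons; apply: supp_inD; first by apply: h; rewrite inE eqxx.
by apply: IH=> j hj; apply: h; rewrite inE hj orbT.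
Qed.

Lemma supp_in_eq0 x : supp_in (fun _ => False) x -> x = 0.
Proof.
move=> h; apply/malgP=> k; rewrite mcoeff0 mcoeff_outdom //.
by apply/negP=> /h.
Qed.

End Gen.

Section Gen2.
Variables (K : fieldType) (X : choiceType) (Y : choiceType).
Lemma supp_in_lin (P : Y -> Prop) (f : X -> {malg K[Y]}) x :
  (forall b, b \in msupp x -> supp_in P (f b)) -> supp_in P (lin f x).
Proof.
move=> h; apply: supp_in_sum=> b hb; apply: supp_inZ; exact: h.
Qed.

Lemma islin_comp (M : lmodType K) (F : {malg K[X]} -> {malg K[Y]}) (G : {malg K[Y]} -> M) :
  islin F -> islin G -> islin (fun x => G (F x)).
Proof. by move=> hF hG a x y; rewrite hF hG. Qed.
End Gen2.



Section Mon.
Variable I : choiceType.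
Implicit Types (m : {cmonom I}) (i k l : I).

Lemma cm_mulU m i k : mulcm m (ucm i) k = (m k + (i == k))%N.
Proof. by rewrite mulcmE ucmE. Qed.

Lemma cm_divU m i k : divcm m (ucm i) k = (m k - (i == k))%N.
Proof. by rewrite divcmE ucmE. Qed.

Lemma cm_dm_mul m k : (m k != 0)%N -> mulcm (divcm m (ucm k)) (ucm k) = m.
Proof.
move=> nz; apply/eqP/cmP=> l; rewrite cm_mulU cm_divU.
case: eqP=> [<-|_]; last by rewrite subn0 addn0.
by rewrite subnK // lt0n.
Qed.

Lemma cm_mul_div m i : divcm (mulcm m (ucm i)) (ucm i) = m.
Proof. by apply/eqP/cmP=> l; rewrite cm_divU cm_mulU addnK. Qed.

Lemma cm_comm m i k : i != k ->
  divcm (mulcm m (ucm i)) (ucm k) = mulcm (divcm m (ucm k)) (ucm i).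
Proof.
move=> ne; apply/eqP/cmP=> l; rewrite cm_divU cm_mulU cm_mulU cm_divU.
case E1: (i == l); case E2: (k == l) => /=.
- by move: ne; rewrite (eqP E1) (eqP E2) eqxx.
- by rewrite !subn0.
- by rewrite addn0 addn0.
- by rewrite !subn0 !addn0.
Qed.

Lemma cm_divdiv m k l :
  divcm (divcm m (ucm k)) (ucm l) = divcm (divcm m (ucm l)) (ucm k).
Proof. by apply/eqP/cmP=> t; rewrite !cm_divU -!subnDA addnC. Qed.

Lemma cm_mulA m i k : mulcm (mulcm m (ucm i)) (ucm k) = mulcm (mulcm m (ucm k)) (ucm i).
Proof. by rewrite -!mulcmA (mulcmC (ucm i)). Qed.

Lemma mdeg_mulU m i : mdeg (mulcm m (ucm i)) = (mdeg m).+1.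
Proof. by have := @mdegM I m (ucm i); rewrite mdegU addn1. Qed.

Lemma mdeg_divU m k : (m k != 0)%N -> mdeg (divcm m (ucm k)) = (mdeg m).-1.
Proof. by move=> nz; rewrite -{2}(cm_dm_mul nz) mdeg_mulU. Qed.

Lemma mdeg_one : mdeg (@onecm I) = 0%N.
Proof. exact: mdeg1. Qed.

Lemma mulU_neq1 m i : (mulcm m (ucm i) == @onecm I) = false.
Proof. apply/negbTE; apply/eqP=> e; have := mdeg_mulU m i; by rewrite e mdeg_one. Qed.

Lemma fs_one : finsupp (@onecm I) = fset0.
Proof. exact: mdom1. Qed.

Lemma fs_mulU m i : finsupp (mulcm m (ucm i)) = (finsupp m `|` [fset i])%fset.
Proof.
apply/fsetP=> k; rewrite in_fsetU in_fset1 -!cmE_neq0 cm_mulU addn_eq0 negb_and.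
by rewrite (eq_sym k i); case: (i == k); rewrite ?orbT ?orbF.
Qed.
End Mon.



Section Spec.
Variables (K : fieldType) (I : choiceType).
Local Notation MB := (MB I).
Local Notation Moor := (Moor K I).
Local Notation Moor2 := (Moor2 K I).
Local Notation pb := (@prec_basis K I).

Lemma islin_eq (X : choiceType) (M : lmodType K) (F : {malg K[X]} -> M) f :
  (forall x, F x = lin f x) -> islin F.
Proof. by move=> e a x y; rewrite !e lin_is_lin. Qed.

Lemma islin_const0 (X : choiceType) (M : lmodType K) : islin (fun _ : {malg K[X]} => (0 : M)).
Proof. by move=> a x y; rewrite scaler0 addr0. Qed.

Lemma prec_lin (x y : Moor) : prec x y = lin (fun b => lin (pb b) y) x.
Proof.
rewrite /prec /lin; apply: eq_bigr=> b _; rewrite scaler_sumr.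
by apply: eq_bigr=> c _; rewrite scalerA.
Qed.

Lemma tens_lin (x y : Moor) : tens x y = lin (fun b => lin (fun c => bas K (b, c) : Moor2) y) x.
Proof.
rewrite /tens /lin; apply: eq_bigr=> b _; rewrite scaler_sumr.
by apply: eq_bigr=> c _; rewrite scalerA toBas.
Qed.

Lemma eproj_lin (y : Moor) :
  eproj y = lin (fun c => if mdeg c.2 == 0%N then bas K c else 0) y.
Proof.
rewrite /eproj /lin big_mkcond; apply: eq_bigr=> c _.
by case: ifP=> _; rewrite ?scaler0 // mkU.
Qed.

Lemma precl y : islin (fun x : Moor => prec x y).
Proof. exact: islin_eq (fun x => prec_lin x y). Qed.

Lemma precr x : islin (fun y : Moor => prec x y).
Proof.
move=> a y z; rewrite !prec_lin -lin_comb; apply: lin_ext=> b _.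
exact: lin_is_lin.
Qed.

Lemma tensl y : islin (fun x : Moor => tens x y).
Proof. exact: islin_eq (fun x => tens_lin x y). Qed.

Lemma tensr x : islin (fun y : Moor => tens x y).
Proof.
move=> a y z; rewrite !tens_lin -lin_comb; apply: lin_ext=> b _.
exact: lin_is_lin.
Qed.

Lemma eproj_islin : islin (@eproj K I).
Proof. exact: islin_eq eproj_lin. Qed.

Lemma prec_UU (b c : MB) : prec (bas K b) (bas K c) = pb b c.
Proof. by rewrite prec_lin !linU. Qed.

Lemma tens_UU (b c : MB) : tens (bas K b) (bas K c) = bas K (b, c).
Proof. by rewrite tens_lin !linU. Qed.

Lemma eproj_U (c : MB) : eproj (bas K c) = if mdeg c.2 == 0%N then bas K c else 0.
Proof. by rewrite eproj_lin linU. Qed.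

Definition Dbasis (b : MB) : Moor2 :=
  \sum_(k <- finsupp b.2) (b.2 k)%:R *: bas K ((b.1, divcm b.2 (ucm k)), (k, @onecm I)).

Definition Dm (x : Moor) : Moor2 := lin Dbasis x.

Lemma Dm_islin : islin Dm.
Proof. exact: lin_is_lin. Qed.

Lemma Dm_U b : Dm (bas K b) = Dbasis b.
Proof. exact: linU. Qed.

Lemma Db_Dm b : Db Dm b = Dbasis b.
Proof. by rewrite /Db toBas Dm_U. Qed.

Lemma Dbasis_one (k : I) : Dbasis (k, @onecm I) = 0.
Proof. by rewrite /Dbasis /= fs_one big_seq_fset0. Qed.

Lemma prec_left_l (y : Moor) : islin (fun z : Moor2 => prec_left z y).
Proof. exact: islin_eq (fun z => erefl). Qed.

Lemma prec_left_r (z : Moor2) : islin (fun y : Moor => prec_left z y).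
Proof.
move=> a y y'; rewrite /prec_left.
have := lin_comb (fun p : (MB * MB)%type => tens (prec << p.1 >> y) << p.2 >>)
   (fun p => tens (prec << p.1 >> y') << p.2 >>) a z.
rewrite /lin => <-; apply: eq_bigr=> p _; congr (_ *: _).
by rewrite (precr _ a y y') (tensl _ a).
Qed.

Lemma prec_left_U (p : MB * MB) (y : Moor) : prec_left (bas K p) y = tens (prec (bas K p.1) y) (bas K p.2).
Proof.
transitivity (tens (prec << p.1 >> y) << p.2 >>).
  exact: (linU (fun p : (MB * MB)%type => tens (prec << p.1 >> y) << p.2 >>)).
by rewrite !toBas.
Qed.

End Spec.



Section Ax.
Variables (K : fieldType) (I : choiceType).
Local Notation MB := (MB I).
Local Notation Moor := (Moor K I).
Local Notation Moor2 := (Moor2 K I).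
Local Notation pb := (@prec_basis K I).
Local Notation Dm := (@Dm K I).

Lemma ax_grad p q (x y : Moor) : homog p x -> homog q y -> homog (p + q) (prec x y).
Proof.
move=> hx hy; rewrite prec_lin.
change (supp_in (fun b => mdegB b = (p + q)%N) (lin (fun b => lin (pb b) y) x)).
apply: supp_in_lin=> b hb; apply: supp_in_lin=> c hc.
rewrite /prec_basis; case: eqP=> [e|_]; last exact: supp_in0.
rewrite toBas; apply: supp_inU; have := hx b hb; have := hy c hc.
rewrite /mdegB /= e mdeg_one mdeg_mulU => <- <-.
by rewrite addn1.
Qed.

Lemma prec0l (y : Moor) : prec 0 y = 0.
Proof. exact: (islin0 (precl y)). Qed.
Lemma prec0r (x : Moor) : prec x 0 = 0.
Proof. exact: (islin0 (precr x)). Qed.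

Lemma ax_rcomm (x y z : Moor) : prec (prec x y) z = prec (prec x z) y.
Proof.
move: x; apply: (islin_ext (F := fun x => prec (prec x y) z) (G := fun x => prec (prec x z) y)).
- exact: islin_comp (precl y) (precl z).
- exact: islin_comp (precl z) (precl y).
move=> b; move: y; apply: (islin_ext (F := fun y => prec (prec (bas K b) y) z)
   (G := fun y => prec (prec (bas K b) z) y)).
- exact: islin_comp (precr _) (precl z).
- exact: precr.
move=> c; move: z; apply: (islin_ext (F := fun z => prec (prec (bas K b) (bas K c)) z)
   (G := fun z => prec (prec (bas K b) z) (bas K c))).
- exact: precr.
- exact: islin_comp (precr _) (precl _).
move=> d; rewrite !prec_UU /prec_basis.
case ec: (c.2 == @onecm I); case ed: (d.2 == @onecm I).
- by rewrite !toBas !prec_UU /prec_basis /= ec ed cm_mulA.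
- by rewrite toBas prec_UU /prec_basis ed prec0l.
- by rewrite toBas prec_UU /prec_basis ec prec0l.
- by rewrite !prec0l.
Qed.

Lemma ax_nil (x y z : Moor) : prec x (prec y z) = 0.
Proof.
move: x; apply: (islin_ext (F := fun x => prec x (prec y z)) (G := fun _ => 0)).
- exact: precl.
- exact: islin_const0.
move=> b; move: y; apply: (islin_ext (F := fun y => prec (bas K b) (prec y z)) (G := fun _ => 0)).
- exact: islin_comp (precl z) (precr _).
- exact: islin_const0.
move=> c; move: z; apply: (islin_ext (F := fun z => prec (bas K b) (prec (bas K c) z)) (G := fun _ => 0)).
- exact: islin_comp (precr _) (precr _).
- exact: islin_const0.
move=> d; rewrite prec_UU /prec_basis; case: eqP=> ed; last exact: prec0r.
by rewrite toBas prec_UU /prec_basis /= mulU_neq1.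
Qed.

Lemma idtD_islin : islin (id_tens_D Dm).
Proof. exact: islin_eq (fun z => erefl). Qed.

Lemma ax_coass0 (x : Moor) : id_tens_D Dm (Dm x) = 0.
Proof.
move: x; apply: (islin_ext (F := fun x => id_tens_D Dm (Dm x)) (G := fun _ => 0)).
- exact: (islin_comp (@Dm_islin K I) idtD_islin).
- exact: islin_const0.
move=> b; rewrite Dm_U /Dbasis (lin_sumZ _ _ _ idtD_islin).
apply: big1=> k _; rewrite /id_tens_D /lin.
by rewrite msupp_bas big_seq_fset1 Db_Dm /= Dbasis_one msupp0 big_seq_fset0 !scaler0.
Qed.
End Ax.



Section Ax2.
Variables (K : fieldType) (I : choiceType).
Local Notation MB := (MB I).
Local Notation Moor := (Moor K I).
Local Notation Moor2 := (Moor2 K I).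
Local Notation Moor3 := (Moor3 K I).
Local Notation pb := (@prec_basis K I).
Local Notation Dm := (@Dm K I).

Lemma Dti_islin : islin (D_tens_id Dm).
Proof. exact: islin_eq (fun z => erefl). Qed.
Lemma tau_islin : islin (@id_tens_tau K I).
Proof. exact: islin_eq (fun z => erefl). Qed.

Lemma Dti_U (p : MB * MB) :
  D_tens_id Dm (bas K p) = lin (fun q : MB * MB => bas K (q.1, q.2, p.2)) (Dbasis K p.1).
Proof.
transitivity (\sum_(q <- msupp (Db Dm p.1)) (Db Dm p.1)@_q *: << (q.1, q.2, p.2) >> : Moor3).
  exact: (linU (fun p : (MB * MB)%type => \sum_(q <- msupp (Db Dm p.1)) (Db Dm p.1)@_q *: << (q.1, q.2, p.2) >> : Moor3)).
by rewrite Db_Dm /lin; apply: eq_bigr=> q _; rewrite toBas.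
Qed.

Lemma tau_U (t : MB * MB * MB) : id_tens_tau (bas K t) = bas K (t.1.1, t.2, t.1.2).
Proof.
transitivity (<< (t.1.1, t.2, t.1.2) >> : Moor3).
  exact: (linU (fun p : (MB * MB * MB)%type => << (p.1.1, p.2, p.1.2) >> : Moor3)).
by rewrite toBas.
Qed.

Lemma Dti_U2 j (m : {cmonom I}) k :
  D_tens_id Dm (bas K ((j, m), (k, @onecm I))) =
  \sum_(l <- finsupp m) (m l)%:R *: bas K (((j, divcm m (ucm l)), (l, @onecm I)), (k, @onecm I)).
Proof.
rewrite Dti_U /Dbasis /= (lin_sumZ _ _ _ (lin_is_lin _)); apply: eq_bigr=> l _.
congr (_ *: _); exact: linU.
Qed.

Lemma fs_div_sub (m : {cmonom I}) k : (finsupp (divcm m (ucm k)) `<=` finsupp m)%fset.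
Proof.
apply/fsubsetP=> l; rewrite -!cmE_neq0 cm_divU; apply: contra=> /eqP ->; by rewrite sub0n.
Qed.

Lemma sum_div_ext (X : lmodType K) (m : {cmonom I}) k (f : I -> X) :
  \sum_(l <- finsupp (divcm m (ucm k))) ((divcm m (ucm k)) l)%:R *: f l =
  \sum_(l <- finsupp m) ((divcm m (ucm k)) l)%:R *: f l.
Proof.
apply: big_fset_incl; first exact: fs_div_sub.
by move=> l _; rewrite -cmE_eq0 => /eqP ->; rewrite scale0r.
Qed.

Lemma coef_sym (m : {cmonom I}) k l :
  ((m l * (divcm m (ucm l)) k)%N = (m k * (divcm m (ucm k)) l)%N).
Proof.
rewrite !cm_divU. case: (l =P k) => [->|ne]; first by rewrite eqxx.
have E : (k == l) = false by apply/eqP=> e; apply: ne.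
rewrite E /= !subn0. exact: mulnC.
Qed.

Lemma side (m : {cmonom I}) (f : I -> I -> Moor3) :
  \sum_(k <- finsupp m) (m k)%:R *: \sum_(l <- finsupp (divcm m (ucm k))) ((divcm m (ucm k)) l)%:R *: f k l =
  \sum_(k <- finsupp m) \sum_(l <- finsupp m) ((m k * (divcm m (ucm k)) l)%N)%:R *: f k l.
Proof.
apply: eq_bigr=> k _; rewrite (sum_div_ext m k (f k)) scaler_sumr.
by apply: eq_bigr=> l _; rewrite scalerA natrM.
Qed.

Lemma ax_coass (x : Moor) :
  D_tens_id Dm (Dm x) = id_tens_tau (D_tens_id Dm (Dm x)).
Proof.
move: x; apply: (islin_ext (F := fun x => D_tens_id Dm (Dm x))
  (G := fun x => id_tens_tau (D_tens_id Dm (Dm x)))).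
- exact: (islin_comp (@Dm_islin K I) Dti_islin).
- exact: (islin_comp (islin_comp (@Dm_islin K I) Dti_islin) tau_islin).
case=> j m; rewrite Dm_U /Dbasis /= (lin_sumZ _ _ _ Dti_islin).
under eq_bigr=> k _ do rewrite Dti_U2.
rewrite islin_sum; last exact: tau_islin.
under [in RHS]eq_bigr=> k _ do rewrite (islinZ tau_islin) (lin_sumZ _ _ _ tau_islin).
apply: etrans; first exact: side.
apply: esym; apply: etrans; first exact: side.
apply: etrans; first exact: exchange_big.
apply: eq_bigr=> k _; apply: eq_bigr=> l _.
rewrite tau_U /=.
exact: (congr2 (fun (a : nat) b => a%:R *: bas K (j, b, (l, onecm I), (k, onecm I)))
  (coef_sym m k l) (cm_divdiv m l k)).
Qed. End Ax2.


Section Ax3.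
Variables (K : fieldType) (I : choiceType).
Local Notation MB := (MB I).
Local Notation Moor := (Moor K I).
Local Notation Moor2 := (Moor2 K I).
Local Notation pb := (@prec_basis K I).
Local Notation Dm := (@Dm K I).
Local Notation one := (@onecm I).

Lemma comp_term j (m : {cmonom I}) i k :
  ((mulcm m (ucm i)) k)%:R *: bas K ((j, divcm (mulcm m (ucm i)) (ucm k)), (k, one)) =
  (m k)%:R *: bas K ((j, mulcm (divcm m (ucm k)) (ucm i)), (k, one))
  + (i == k)%:R *: bas K ((j, m), (i, one)) :> Moor2.
Proof.
rewrite cm_mulU natrD scalerDl; case: (i =P k)=> [ek|nk].
  subst k; rewrite cm_mul_div.
  case mi: (m i == 0%N); first by rewrite (eqP mi) !scale0r.
  by rewrite cm_dm_mul ?mi.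
have nk' : i != k by apply/eqP.
by rewrite (cm_comm m nk') /= !scale0r !addr0.
Qed.

Lemma comp_sum j (m : {cmonom I}) i :
  \sum_(k <- finsupp (mulcm m (ucm i)))
     ((mulcm m (ucm i)) k)%:R *: bas K ((j, divcm (mulcm m (ucm i)) (ucm k)), (k, one))
  = bas K ((j, m), (i, one)) +
    \sum_(k <- finsupp m) (m k)%:R *: bas K ((j, mulcm (divcm m (ucm k)) (ucm i)), (k, one)) :> Moor2.
Proof.
set R := fun k => (m k)%:R *: bas K ((j, mulcm (divcm m (ucm k)) (ucm i)), (k, one)) : Moor2.
set B := bas K ((j, m), (i, one)) : Moor2.
have -> : \sum_(k <- finsupp (mulcm m (ucm i)))
     ((mulcm m (ucm i)) k)%:R *: bas K ((j, divcm (mulcm m (ucm i)) (ucm k)), (k, one))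
   = \sum_(k <- (finsupp m `|` [fset i])%fset) (R k + (i == k)%:R *: B).
  by rewrite fs_mulU; apply: eq_bigr=> k _; rewrite comp_term.
have e1 : \sum_(k <- (finsupp m `|` [fset i])%fset) (i == k)%:R *: B = B.
  have hi : i \in (finsupp m `|` [fset i])%fset by rewrite in_fsetU in_fset1 eqxx orbT.
  rewrite (bigD1_seq i hi (fset_uniq _)) /= eqxx scale1r big1 ?addr0 //.
  by move=> k /negbTE; rewrite eq_sym => ->; rewrite scale0r.
have e2 : \sum_(k <- (finsupp m `|` [fset i])%fset) R k = \sum_(k <- finsupp m) R k.
  apply: esym; apply: big_fset_incl; first exact: fsubsetUl.
  by move=> k _; rewrite -cmE_eq0 /R => /eqP ->; rewrite scale0r.
rewrite big_split /=.
exact: (etrans (f_equal2 (fun a b => a + b) e2 e1) (addrC _ _)).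
Qed.

Lemma ax_comp (x y : Moor) : Dm (prec x y) = tens x (eproj y) + prec_left (Dm x) y.
Proof.
move: x; apply: (islin_ext (F := fun x => Dm (prec x y))
   (G := fun x => tens x (eproj y) + prec_left (Dm x) y)).
- exact: (islin_comp (precl y) (@Dm_islin K I)).
- exact: (islin_add (tensl (eproj y)) (islin_comp (@Dm_islin K I) (prec_left_l y))).
move=> b; rewrite Dm_U; move: y.
apply: (islin_ext (F := fun y => Dm (prec (bas K b) y))
   (G := fun y => tens (bas K b) (eproj y) + prec_left (Dbasis K b) y)).
- exact: (islin_comp (precr _) (@Dm_islin K I)).
- exact: (islin_add (islin_comp (@eproj_islin K I) (tensr _)) (prec_left_r _)).
move=> c; rewrite prec_UU eproj_U /Dbasis (lin_sumZ _ _ _ (prec_left_l _)).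
case: b => j m; case: c => i n; rewrite /prec_basis /=.
under eq_bigr=> k _ do rewrite prec_left_U /= prec_UU /prec_basis /=.
case en: (n == one).
  move/eqP: en => ->; rewrite mdeg_one !eqxx.
  rewrite toBas Dm_U tens_UU.
  under eq_bigr=> k _ do rewrite toBas tens_UU.
  exact: comp_sum.
have hn : (mdeg n == 0%N) = false.
  by apply/negbTE; apply: contraFN en => /eqP/mdeg_eq0I ->.
rewrite hn (islin0 (@Dm_islin K I)) (islin0 (tensr _)) add0r big1 // => k _.
by rewrite (islin0 (tensl _)) scaler0.
Qed.
End Ax3.



Section Conn.
Variables (K : fieldType) (I : choiceType).
Local Notation MB := (MB I).
Local Notation Moor := (Moor K I).
Local Notation Moor2 := (Moor2 K I).
Local Notation Dm := (@Dm K I).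
Local Notation one := (@onecm I).

Definition mub (p : MB * MB) : Moor :=
  if p.2.2 == one then bas K (p.1.1, mulcm p.1.2 (ucm p.2.1)) else 0.

Lemma mu_Dbasis (b : MB) : lin mub (Dbasis K b) = (mdeg b.2)%:R *: bas K b.
Proof.
case: b => j m; rewrite /Dbasis /= (lin_sumZ _ _ _ (lin_is_lin _)).
transitivity (\sum_(k <- finsupp m) (m k)%:R *: bas K (j, m)).
  rewrite big_seq [RHS]big_seq; apply: eq_bigr=> k hk.
  rewrite linU /mub /= eqxx cm_dm_mul //.
  by rewrite cmE_neq0.
by rewrite -scaler_suml -natr_sum.
Qed.

Lemma mu_Dm (x : Moor) : lin mub (Dm x) = lin (fun b => (mdeg b.2)%:R *: bas K b) x.
Proof.
move: x; apply: (islin_ext (F := fun x => lin mub (Dm x))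
   (G := lin (fun b => (mdeg b.2)%:R *: bas K b))).
- exact: (islin_comp (@Dm_islin K I) (lin_is_lin _)).
- exact: lin_is_lin.
by move=> b; rewrite Dm_U mu_Dbasis linU.
Qed.

Lemma coef_diag (c : MB -> K) (x : Moor) b0 :
  (lin (fun b => c b *: bas K b) x)@_b0 = x@_b0 * c b0.
Proof.
rewrite /lin raddf_sum /=.
have E : forall b, (x@_b *: (c b *: bas K b))@_b0 = x@_b * (c b * (b == b0)%:R).
  by move=> b; rewrite !mcoeffZ mcoeff_bas.
under eq_bigr=> b _ do rewrite E.
case hb: (b0 \in msupp x).
  rewrite (bigD1_seq b0 hb (fset_uniq _)) /= eqxx mulr1 big1 ?addr0 //.
  by move=> b /negbTE ->; rewrite mulr0 mulr0.
rewrite mcoeff_outdom ?hb // mul0r big1_seq // => b /andP[_ hb'].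
have -> : (b == b0) = false by apply/negbTE; apply: contraFN hb => /eqP <-.
by rewrite mulr0 mulr0.
Qed.

Lemma conn1 (charK0 : [pchar K] =i pred0) (x : Moor) : Dm x = 0 -> homog 1 x.
Proof.
move=> h b hb.
have e := congr1 (lin mub) h; rewrite mu_Dm lin0 in e.
have := congr1 (mcoeff b) e; rewrite coef_diag mcoeff0 => /eqP.
rewrite mulf_eq0 => /orP[xb|].
  by move: hb; rewrite -mcoeff_neq0 xb.
rewrite ((pcharf0P K).1 charK0) => /eqP e0.
by rewrite /mdegB e0.
Qed.

Definition FLP (n : nat) (s : seq MB) : Prop :=
  if s is b :: _ then (mdeg b.2 < n)%N else False.

Lemma Dbasis_supp (b : MB) n : (mdeg b.2 < n.+1)%N ->
  supp_in (fun q : MB * MB => (mdeg q.1.2 < n)%N) (Dbasis K b).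
Proof.
case: b => j m /= h; apply: supp_in_sum=> k hk; apply: supp_inZ; apply: supp_inU=> /=.
have hk' : (m k != 0)%N by rewrite cmE_neq0.
by move: h; rewrite -{1}(cm_dm_mul hk') mdeg_mulU ltnS.
Qed.

Lemma Dm_supp (x : Moor) n : (forall b, b \in msupp x -> (mdeg b.2 < n.+1)%N) ->
  supp_in (fun q : MB * MB => (mdeg q.1.2 < n)%N) (Dm x).
Proof. by move=> h; apply: supp_in_lin=> b hb; apply: Dbasis_supp; apply: h. Qed.

Lemma toW2_supp (z : Moor2) n : supp_in (fun q : MB * MB => (mdeg q.1.2 < n)%N) z ->
  supp_in (FLP n) (toW2 z).
Proof.
move=> h; rewrite /toW2; apply: supp_in_sum=> p hp; apply: supp_inZ.
by rewrite toBas; apply: supp_inU=> /=; apply: h.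
Qed.

Lemma Dfirst_supp (w : MoorW K I) n : supp_in (FLP n.+1) w -> supp_in (FLP n) (D_first Dm w).
Proof.
move=> h; rewrite /D_first; apply: supp_in_sum=> s hs; apply: supp_inZ.
have := h s hs; case: s hs => [|b t] hs //= hb.
rewrite Db_Dm; apply: supp_in_sum=> q hq; apply: supp_inZ.
rewrite toBas; apply: supp_inU=> /=.
exact: (Dbasis_supp hb hq).
Qed.

Lemma FL0 (w : MoorW K I) : supp_in (FLP 0) w -> w = 0.
Proof.
move=> h; apply: supp_in_eq0=> s hs; have := h s hs.
by case: s hs => [|b t] //= _; rewrite ltn0.
Qed.

Lemma conn2 (x : Moor) : exists r, (1 <= r)%N /\ Diter Dm r x = 0.
Proof.
set n := \max_(b <- msupp x) mdeg b.2.
exists n.+1; split=> //.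
have hx : forall b, b \in msupp x -> (mdeg b.2 < n.+1)%N.
  by move=> b hb; rewrite ltnS; apply: (leq_bigmax_seq (F := fun b : MB => mdeg b.2)).
have H : forall k, (k <= n)%N -> supp_in (FLP (n - k)) (Diter Dm k.+1 x).
  elim=> [|k IH] hk.
    by rewrite subn0; apply: toW2_supp; apply: Dm_supp.
  change (supp_in (FLP (n - k.+1)) (D_first Dm (Diter Dm k.+1 x))).
  apply: Dfirst_supp; rewrite (subnSK hk); apply: IH; exact: ltnW.
apply: FL0; rewrite -(subnn n); exact: H.
Qed.
End Conn.


Unset Implicit Arguments.

Theorem theorem4p2 (K : fieldType) (I : choiceType)
  (charK0 : [pchar K] =i pred0) :
  exists D : Moor K I -> Moor2 K I,
    is_Moor_bialgebra D /\ Moor_connected D.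
Proof.
exists (@Dm K I); split.
  split; first by move=> a x y z; exact: (precl z a x y).
  split; first by move=> a x y z; exact: (precr x a y z).
  split; first exact: ax_grad.
  split; first exact: ax_rcomm.
  split; first exact: ax_nil.
  split; first exact: (@Dm_islin K I).
  split; first exact: ax_coass0.
  split; first exact: ax_coass.
  exact: ax_comp.
split; first exact: conn1.
exact: conn2.
Qed.
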